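(* Let $\theta\in\mathrm{Mat}_{r\times r}(\bar k[[\sigma]])$, $a\in\mathrm{Mat}_{r\times r}(\bar k)$, $e\in\mathrm{Mat}_{r\times s}(\bar k)$, $b\in\mathrm{Mat}_{s\times s}(\bar k)$ satisfy $\partial\theta=a$, $(a-T\mathbf 1_r)^r=0$, $ae=eb$, $(b-T\mathbf 1_s)^s=0$. Then there exists a unique $E\in\mathrm{Mat}_{r\times s}(\bar k[[\sigma]])$ with $\theta E=Eb$ and $\partial E=e$.
   Context: $\bar k$ is the algebraic closure of $k=\mathbb F_q(T)$. $\bar k[[\sigma]]$ is the ring of formal series $\sum_{i\ge0}a_i\sigma^i$ ($a_i\in\bar k$) with multiplication $(\sum_ia_i\sigma^i)(\sum_jb_j\sigma^j)=\sum_{i,j}a_ib_j^{q^{-i}}\sigma^{i+j}$ (the completion of the skew polynomial ring with $\sigma x=x^{q^{-1}}\sigma$). For a matrix $\phi=\sum_i a_{(i)}\sigma^i$ with $a_{(i)}$ matrices over $\bar k$, $\partial\phi:=a_{(0)}$. $\mathbf 1_n$ is the identity matrix. *)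

(* Defs.v *)
From HB Require Import structures.
From mathcomp Require Import all_boot all_order all_algebra all_field.
From mathcomp Require Import fraction.
Set Implicit Arguments. Unset Strict Implicit. Unset Printing Implicit Defensive.
Import GRing.Theory.
Local Open Scope ring_scope.

Definition ratfun (F : finFieldType) := {fraction {poly F}}.

Definition ratT (F : finFieldType) : ratfun F := @FracField.tofrac _ ('X : {poly F}).

(* An r x s matrix over the skew power series ring L[[sigma]] is encoded by
   its sequence of coefficient matrices: phi = sum_i phi i sigma^i,
   phi i : 'M[L]_(r,s).  The twist is given by fr, the inverse Frobenius
   x |-> x^(1/q) on L, so that sigma x = (fr x) sigma. *)
Definition smx (L : Type) (r s : nat) := nat -> 'M[L]_(r, s).

(* Product in L[[sigma]]:
   (sum_i a_i sigma^i)(sum_j b_j sigma^j) = sum_{i,j} a_i b_j^{q^{-i}} sigma^{i+j},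
   extended to matrices. *)
Definition smul (L : pzRingType) (fr : L -> L) (r s t : nat)
  (A : smx L r s) (B : smx L s t) : smx L r t :=
  fun n => \sum_(i < n.+1) A i *m map_mx (iter i fr) (B (n - i)%N).

Definition sconst (L : pzRingType) (r s : nat) (c : 'M[L]_(r, s)) : smx L r s :=
  fun n => if n == 0%N then c else 0.

Definition sdel (L : Type) (r s : nat) (phi : smx L r s) : 'M[L]_(r, s) := phi 0%N.

(* Main.v *)
Require Import Defs.
From HB Require Import structures.
From mathcomp Require Import all_boot all_order all_algebra all_field.
From mathcomp Require Import fraction.
From Stdlib Require Import ClassicalEpsilon FunctionalExtensionality.
Import GRing.Theory.
Local Open Scope ring_scope.

Section Sylv.
Variable (L : fieldType) (r s : nat) (A : 'M[L]_r) (B : 'M[L]_s) (al be : L).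
Hypotheses (hne : al != be) (hA : (A - al%:M)^+r = 0) (hB : (B - be%:M)^+s = 0).
Let d := be - al.
Let M := B - be%:M.
Let N := A - al%:M.
Let P := M + d%:M.
Let f k := ((- d^-1)^+k) *: M^+k.
Let Q := \sum_(0 <= k < s) d^-1 *: f k.

Let dn0 : d != 0. Proof. by rewrite /d subr_eq0 eq_sym. Qed.

Lemma PQ : P *m Q = 1%:M.
Proof.
have step k : P *m (d^-1 *: f k) = f k - f k.+1.
  rewrite /P /f mulmxDl -scalemxAr mul_scalar_mx scalerA mulfV // scale1r.
  rewrite -scalemxAr mulmxE -exprS scalerA exprS.
  by rewrite exprS mulNr scaleNr opprK addrC.
rewrite /Q mulmx_sumr (eq_bigr _ (fun k _ => step k)).
have := telescope_sumr f (leq0n s).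
rewrite sumrB => h.
rewrite sumrB -opprB h /f hB scaler0 expr0 scale1r sub0r opprK.
by [].
Qed.

Lemma QP : Q *m P = 1%:M.
Proof. exact: mulmx1C PQ. Qed.

Lemma key X : A *m X - X *m B = N *m X - X *m P.
Proof.
rewrite /N /P /M /d mulmxBl mulmxDr mulmxBr !mul_scalar_mx scalar_mxC mul_scalar_mx.
rewrite scalar_mxC mul_scalar_mx scalerBl.
by rewrite addrA subrK opprB addrA subrK.
Qed.

Lemma sylv_uniq X : A *m X = X *m B -> X = 0.
Proof.
move=> h.
have hNP : N *m X = X *m P.
  by apply/eqP; rewrite -subr_eq0 -key h subrr.
have hk k : N ^+ k *m X = X *m P ^+ k.
  elim: k => [|k IH]; first by rewrite !expr0 mul1mx mulmx1.
  by rewrite exprS -mulmxE -mulmxA IH mulmxA hNP -mulmxA mulmxE -exprS.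
have hX k : X = X *m P ^+ k *m Q ^+ k.
  elim: k => [|k IH]; first by rewrite !expr0 !mulmx1.
  rewrite exprSr exprS -!mulmxE !mulmxA -(mulmxA _ P) PQ mulmx1.
  exact: IH.
by rewrite (hX r) -hk hA mul0mx mul0mx.
Qed.

Lemma sylv_ex C : exists X, A *m X - X *m B = C.
Proof.
pose g k := N ^+ k *m C *m Q ^+ k.
exists (- \sum_(0 <= k < r) N ^+ k *m C *m Q ^+ k.+1).
rewrite key mulmxN mulNmx mulmx_sumr mulmx_suml.
have e1 k : N *m (N ^+ k *m C *m Q ^+ k.+1) = g k.+1.
  by rewrite /g !mulmxA mulmxE -exprS.
have e2 k : N ^+ k *m C *m Q ^+ k.+1 *m P = g k.
  by rewrite /g exprSr -mulmxE -!mulmxA QP mulmx1.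
rewrite (eq_bigr _ (fun k _ => e1 k)) (eq_bigr _ (fun k _ => e2 k)).
rewrite opprK addrC -opprB -sumrB telescope_sumr // /g hA mul0mx expr0.
by rewrite mul0mx sub0r opprK mul1mx mulmx1.
Qed.
End Sylv.
Section Frob.
Variables (L : fieldType) (q : nat) (hq : [pchar L].-nat q) (fr : L -> L)
  (hfr : forall x, fr x ^+ q = x).

Lemma frobD (x y : L) : (x + y) ^+ q = x ^+ q + y ^+ q.
Proof. exact: exprDn_pchar. Qed.

Lemma frob_inj (x y : L) : x ^+ q = y ^+ q -> x = y.
Proof.
move=> h; have q0 : (0 < q)%N by case/andP: hq.
have e : x ^+ q = (x - y) ^+ q + y ^+ q by rewrite -frobD subrK.
have : (x - y) ^+ q = 0 by apply: (addIr (y ^+ q)); rewrite -e h add0r.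
by move/eqP; rewrite expf_eq0 q0 subr_eq0 => /eqP.
Qed.

Lemma frD (x y : L) : fr (x + y) = fr x + fr y.
Proof. by apply: frob_inj; rewrite frobD !hfr. Qed.

Lemma fr_zmod : zmod_morphism fr.
Proof. by move=> x y; apply: (addIr (fr y)); rewrite -frD !subrK. Qed.

Lemma fr_mon : monoid_morphism fr.
Proof.
split; first by apply: frob_inj; rewrite hfr expr1n.
by move=> x y; apply: frob_inj; rewrite exprMn !hfr.
Qed.

Definition frn n := iter n fr.
Lemma frn_zmod n : zmod_morphism (frn n).
Proof.
elim: n => [|n IH] x y //=; by rewrite IH fr_zmod.
Qed.
Lemma frn_mon n : monoid_morphism (frn n).
Proof.
elim: n => [|n IH] //=; split => [|x y] /=.
- by rewrite IH.1 fr_mon.1.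
- by rewrite IH.2 fr_mon.2.
Qed.
HB.instance Definition _ n := GRing.isZmodMorphism.Build L L (frn n) (frn_zmod n).
HB.instance Definition _ n := GRing.isMonoidMorphism.Build L L (frn n) (frn_mon n).

Lemma map_frnX n k m (A : 'M[L]_m) : map_mx (frn n) (A ^+ k) = (map_mx (frn n) A) ^+ k.
Proof.
elim: k => [|k IH]; first by rewrite !expr0 map_mx1.
by rewrite !exprS -!mulmxE map_mxM IH.
Qed.

Lemma iterfr0 i : iter i fr 0 = 0.
Proof. exact: (raddf0 (frn i)). Qed.

Lemma frn_pow n x : (frn n x) ^+ (q ^ n) = x.
Proof.
elim: n x => [|n IH] x; first by rewrite expn0 expr1.
by rewrite expnS exprM /frn iterS hfr IH.
Qed.

Section Main.
Variables (t : L) (ht : forall n, (0 < n)%N -> frn n t != t).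
Variables (r s : nat) (theta : smx L r r) (a : 'M[L]_r) (e : 'M[L]_(r, s)) (b : 'M[L]_s).
Hypotheses (h0 : theta 0%N = a) (ha : (a - t%:M) ^+ r = 0) (hae : a *m e = e *m b)
  (hb : (b - t%:M) ^+ s = 0).

Definition eqn (E : smx L r s) n := smul fr theta E n = smul fr E (sconst b) n.

Lemma Rhs (E : smx L r s) n : smul fr E (sconst b) n = E n *m map_mx (frn n) b.
Proof.
rewrite /smul big_ord_recr /= subnn /sconst eqxx big1 ?add0r // => i _.
have : (n - i)%N != 0%N by rewrite subn_eq0 -ltnNge.
move/negbTE => ->.
have -> : map_mx (iter i fr) (0 : 'M_s) = 0.
  by apply/matrixP => x y; rewrite !mxE iterfr0.
by rewrite mulmx0.
Qed.

Lemma Lhs (E : smx L r s) n : smul fr theta E n =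
  a *m E n + \sum_(i < n) theta i.+1 *m map_mx (iter i.+1 fr) (E (n - i.+1)%N).
Proof.
by rewrite /smul big_ord_recl /= subn0 h0 map_mx_id.
Qed.

Lemma smul_local (E1 E2 : smx L r s) n :
  (forall m, (m <= n)%N -> E1 m = E2 m) -> smul fr theta E1 n = smul fr theta E2 n.
Proof.
move=> h; rewrite /smul; apply: eq_bigr => i _; by rewrite h // leq_subr.
Qed.

Lemma eqn_local (E1 E2 : smx L r s) n :
  (forall m, (m <= n)%N -> E1 m = E2 m) -> eqn E1 n -> eqn E2 n.
Proof.
move=> h; rewrite /eqn !Rhs (smul_local _ _ _ h) h //.
Qed.

Let bn n := map_mx (frn n) b.

Lemma hbn n : (bn n - (frn n t)%:M) ^+ s = 0.
Proof.
by rewrite /bn -map_scalar_mx -map_mxB -map_frnX hb map_mx0.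
Qed.

Lemma sum_local (E1 E2 : smx L r s) n :
  (forall m, (m <= n)%N -> E1 m = E2 m) ->
  \sum_(i < n.+1) theta i.+1 *m map_mx (iter i.+1 fr) (E1 (n.+1 - i.+1)%N) =
  \sum_(i < n.+1) theta i.+1 *m map_mx (iter i.+1 fr) (E2 (n.+1 - i.+1)%N).
Proof.
move=> h; apply: eq_bigr => i _; by rewrite subSS h // leq_subr.
Qed.

Lemma uniqN (E1 E2 : smx L r s) N : E1 0%N = E2 0%N ->
  (forall m, (m <= N)%N -> eqn E1 m /\ eqn E2 m) ->
  forall m, (m <= N)%N -> E1 m = E2 m.
Proof.
move=> e0; elim: N => [|N IH] H m.
  by rewrite leqn0 => /eqP ->.
rewrite leq_eqVlt => /orP [/eqP -> | ]; last first.
  by apply: IH => // k hk; apply: H; apply: leqW.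
have hl : forall k, (k <= N)%N -> E1 k = E2 k.
  by apply: IH => // k hk; apply: H; apply: leqW.
have [H1 H2] := H N.+1 (leqnn _).
move: H1 H2; rewrite /eqn !Rhs !Lhs (sum_local _ _ _ hl) => H1 H2.
apply/eqP; rewrite -subr_eq0; apply/eqP.
apply: (@sylv_uniq L r s a (bn N.+1) t (frn N.+1 t)).
- by rewrite eq_sym; apply: ht.
- exact: ha.
- exact: hbn.
rewrite mulmxBr mulmxBl /bn -H1 -H2.
by rewrite opprD addrACA subrr addr0.
Qed.

Lemma existN N : exists E : smx L r s, E 0%N = e /\ forall m, (m <= N)%N -> eqn E m.
Proof.
elim: N => [|N [E [E0 HE]]].
  exists (fun _ => e); split => // m; rewrite leqn0 => /eqP ->.
  by rewrite /eqn Rhs Lhs big_ord0 addr0 map_mx_id.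
pose S := \sum_(i < N.+1) theta i.+1 *m map_mx (iter i.+1 fr) (E (N.+1 - i.+1)%N).
have [X hX] := @sylv_ex L r s a (bn N.+1) t (frn N.+1 t)
  (ltac:(by rewrite eq_sym; apply: ht)) ha (hbn N.+1) (- S).
pose E' : smx L r s := fun m => if m == N.+1 then X else E m.
have hl : forall k, (k <= N)%N -> E k = E' k.
  by move=> k hk; rewrite /E'; case: eqP => // ek; move: hk; rewrite ek ltnn.
exists E'; split => // m.
rewrite leq_eqVlt => /orP [/eqP -> | hm]; last first.
  apply: (eqn_local E); last exact: HE.
  by move=> k hk; apply: hl; apply: leq_trans hk _.
rewrite /eqn Rhs Lhs -(sum_local _ _ _ hl) -/S /E' eqxx.
by rewrite -(subrK (X *m bn N.+1) (a *m X)) hX addrAC addNr add0r.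
Qed.

Lemma main : exists! E : smx L r s,
    smul fr theta E = smul fr E (sconst b) /\ sdel E = e.
Proof.
pose G n := proj1_sig (constructive_indefinite_description _ (existN n)).
have HG n : G n 0%N = e /\ forall m, (m <= n)%N -> eqn (G n) m.
  exact: (proj2_sig (constructive_indefinite_description _ (existN n))).
pose E n := G n n.
have agree n : forall m, (m <= n)%N -> E m = G n m.
  move=> m hm; rewrite /E.
  apply: (uniqN _ _ m) => //.
  - by rewrite (HG m).1 (HG n).1.
  - move=> k hk; split; first exact: (HG m).2.
    by apply: (HG n).2; apply: leq_trans hk hm.
have HE : forall n, eqn E n.
  move=> n; apply: (eqn_local (G n)); last exact: (HG n).2.
  by move=> m hm; rewrite (agree n).
exists E; split.
  split; last exact: (HG 0%N).1.
  by apply: functional_extensionality => n; apply: HE.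
move=> E' [HE' E'0]; apply: functional_extensionality => n.
apply: (uniqN _ _ n) => //.
- by rewrite /E (HG 0%N).1.
- by move=> m _; split; [exact: HE | rewrite /eqn HE'].
Qed.
End Main.
End Frob.

Lemma charnat (F : finFieldType) (L : fieldType) (iota : {rmorphism ratfun F -> L}) :
  [pchar L].-nat #|F|.
Proof.
have [p pp cF] := finPcharP F.
have cL : p \in [pchar L].
  apply: (rmorph_pchar iota); apply: (rmorph_pchar (@tofrac _ : {rmorphism _ -> _})).
  exact: (rmorph_pchar (polyC : {rmorphism _ -> _})).
have := pprimeChar_pgroup cF.
rewrite /pgroup.pgroup cardsT => h.
by apply: sub_in_pnat h => n _; rewrite inE => /eqP ->.
Qed.

Theorem lemma4 (F : finFieldType) (L : closedFieldType)
  (iota : {rmorphism ratfun F -> L}) (alg : integralRange iota)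
  (fr : L -> L) (hfr : forall x : L, fr x ^+ #|F| = x)
  (r s : nat) (theta : smx L r r) (a : 'M[L]_r) (e : 'M[L]_(r, s)) (b : 'M[L]_s) :
  sdel theta = a ->
  (a - (iota (ratT F))%:M) ^+ r = 0 ->
  a *m e = e *m b ->
  (b - (iota (ratT F))%:M) ^+ s = 0 ->
  exists! E : smx L r s,
    smul fr theta E = smul fr E (sconst b) /\ sdel E = e.
Proof.
move=> h0 ha hae hb.
have hq := charnat F _ iota.
apply: (main _ _ hq _ hfr (iota (ratT F)) _ _ _ _ _ _ _ h0 ha hae hb) => n n0; apply/eqP => ht.
have := frn_pow _ _ _ hfr n (iota (ratT F)); rewrite ht -rmorphXn => /fmorph_inj.
rewrite /ratT -rmorphXn => /eqP; rewrite tofrac_eq => /eqP hx; have := congr1 (fun p : {poly F} => size p) hx.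
rewrite size_polyXn size_polyX => /eqP; rewrite eqSS.
have : (1 < #|F| ^ n)%N.
  by rewrite -(expn0 #|F|) ltn_exp2l // finNzRing_gt1.
by move=> h /eqP e1; rewrite e1 ltnn in h.
Qed.
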